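(* Let $m\ge0$ and let $\phi_1,\dots,\phi_m$ be anticommuting variables. Let $\mathcal E:\mathscr R\to\mathbb Q(\alpha)[X,Y][\phi_1,\dots,\phi_m]$ be the algebra homomorphism determined by $$\mathcal E(p_n)=X\ (n\ge1),\qquad \mathcal E(\tilde p_n)=\sum_{i=1}^m\phi_i\,h_Y(n+i-m)\ (n\ge0),$$ where $h_Y(r)=\binom{Y+r-1}{r}$ for $r>0$, $h_Y(0)=1$ and $h_Y(r)=0$ for $r<0$. Then for every $f\in\mathscr R$ homogeneous of fermionic degree $m$ and every integer $N\ge m$, $$\mathcal E(f)\big|_{X=N,\,Y=m}=\phi_1\cdots\phi_m\,E_{N,m}(f).$$
   Context: Superfunctions: $x_i$ commuting, $\theta_i$ anticommuting ($\theta_i\theta_j=-\theta_j\theta_i$, $\theta_i^2=0$, commuting with the $x_j$); coefficients in $\mathbb Q(\alpha)$. For a superpartition $\Lambda=(\Lambda_1,\dots,\Lambda_m;\Lambda_{m+1},\dots,\Lambda_\ell)$ ($\Lambda_1>\dots>\Lambda_m\ge0$, $\Lambda_{m+1}\ge\dots\ge\Lambda_\ell>0$), the monomial $m_\Lambda(x_1,\dots,x_N;\theta_1,\dots,\theta_N)=\frac{1}{n_\Lambda!}\sum_{\sigma\in S_N}\theta_{\sigma(1)}\cdots\theta_{\sigma(m)}x_{\sigma(1)}^{\Lambda_1}\cdots x_{\sigma(N)}^{\Lambda_N}$ (with $\Lambda_i=0$ for $i>\ell$, $n_\Lambda!=\prod_{i\ge1}n_{\Lambda^s}(i)!$, $n_{\Lambda^s}(i)$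 the number of parts of $(\Lambda_{m+1},\dots,\Lambda_\ell)$ equal to $i$). $\mathscr R$ is the (super)algebra spanned by the inverse limits of these monomials; for $f\in\mathscr R$, $f(x_1,\dots,x_N;\theta_1,\dots,\theta_N)$ denotes the restriction to $N$ variables. Power sums $p_n=\sum_ix_i^n$ ($n\ge1$), $\tilde p_n=\sum_i\theta_ix_i^n$ ($n\ge0$); the products $p_\Lambda=\tilde p_{\Lambda_1}\cdots\tilde p_{\Lambda_m}p_{\Lambda_{m+1}}\cdots p_{\Lambda_\ell}$ form a basis of $\mathscr R$; the $\tilde p_n$ are odd and the $p_n$ even, and $\mathcal E$ respects this grading. Evaluation: for $F$ symmetric in $x_1,\dots,x_N,\theta_1,\dots,\theta_N$ (simultaneous permutations), homogeneous of degree $m\le N$ in $\theta$, write $F=\sum_{i_1<\dots<i_m}\theta_{i_1}\cdots\theta_{i_m}f_{i_1\dots i_m}(x)$ and set $E_{N,m}(F)=\bigl[f_{1\dots m}(x)/\prod_{1\le i<j\le m}(x_i-x_j)\bigr]_{x_1=\dots=x_N=1}$; for $f\in\mathscr R$, $E_{N,m}(f)=E_{N,m}(f(x_1,\dots,x_N;\theta_1,\dots,\theta_N))$. *)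

(* Defs.v *)
From HB Require Import structures.
From mathcomp Require Import all_boot all_order all_algebra.
From Stdlib Require Import ClassicalEpsilon.
Set Implicit Arguments. Unset Strict Implicit. Unset Printing Implicit Defensive.
Import Order.TTheory GRing.Theory Num.Theory.
Local Open Scope ring_scope.

(* Coefficient field Q(alpha) = rational functions in alpha over Q *)
Definition Qa : fieldType := {fraction {poly rat}}.

(* Grassmann (exterior) algebra over a commutative ring A with odd      *)
(* generators theta_0, ..., theta_{K-1}: an element is the function     *)
(* S |-> coefficient of theta_S, where theta_S is the product of the    *)
(* theta_i, i in S, in increasing order.                                *)
Section Grassmann.
Variables (A : comNzRingType) (K : nat).

Local Notation grass := {ffun {set 'I_K} -> A}.

(* theta_T theta_U = gsign T U theta_(T :|: U) when T, U are disjoint *)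
Definition gsign (T U : {set 'I_K}) : A :=
  (-1) ^+ #|[set p : 'I_K * 'I_K | (p.1 \in T) && (p.2 \in U) && (p.2 < p.1)%N]|.

Definition gmul (u v : grass) : grass :=
  [ffun S : {set 'I_K} => \sum_(T : {set 'I_K} | T \subset S) gsign T (S :\: T) * u T * v (S :\: T)].

Definition gone : grass := [ffun S : {set 'I_K} => (S == set0)%:R].
Definition gscal (a : A) : grass := [ffun S : {set 'I_K} => if S == set0 then a else 0].
Definition gen (i : 'I_K) : grass := [ffun S : {set 'I_K} => (S == [set i])%:R].
Definition gscale (a : A) (u : grass) : grass := [ffun S : {set 'I_K} => a * u S].
Definition gprod (s : seq grass) : grass := foldr gmul gone s.

End Grassmann.
Notation grass A K := {ffun {set 'I_K} -> A}.
Arguments gen {A K}.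
Arguments gone {A K}.
Arguments gscal {A K}.
Arguments gprod {A K}.
Arguments gscale {A K}.
Arguments gmul {A K}.
Arguments gsign {A K}.

(* Polynomials in N commuting variables x_0, ..., x_{N-1} over Qa,     *)
(* as iterated univariate polynomials.                                  *)
Fixpoint mp (n : nat) : idomainType :=
  if n is n'.+1 then ({poly mp n'} : idomainType) else Qa.

Fixpoint mvar (n : nat) : nat -> mp n :=
  match n return nat -> mp n with
  | 0 => fun _ => 0
  | n'.+1 => fun i => if i == n' then 'X else (@mvar n' i)%:P
  end.

Fixpoint mconst (n : nat) : Qa -> mp n :=
  match n return Qa -> mp n with
  | 0 => fun c => c
  | n'.+1 => fun c => (@mconst n' c)%:P
  end.

Fixpoint meval1 (n : nat) : mp n -> Qa :=
  match n return mp n -> Qa with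
  | 0 => fun p => p
  | n'.+1 => fun p => @meval1 n' (p.[1])
  end.

(* Elements of the algebra R: finite linear combinations of the basis  *)
(* p_Lambda; a superpartition Lambda = (a ; lam) with a the fermionic   *)
(* parts (strictly decreasing, >= 0) and lam the bosonic parts          *)
(* (nonincreasing, > 0).                                                *)
Definition spart := (seq nat * seq nat)%type.

Definition is_superpartition (L : spart) : bool :=
  [&& sorted (fun x y => (y < x)%N) L.1, sorted geq L.2 & all (fun k => (0 < k)%N) L.2].

(* f = \sum_(c, L) c * p_L *)
Definition superfun := seq (Qa * spart).

Definition homog_ferm (m : nat) (f : superfun) : bool :=
  all (fun cL => is_superpartition cL.2 && (size cL.2.1 == m)) f.

Definition ptilde_N (N n : nat) : grass (mp N) N :=
  \sum_(i < N) gscale (mvar N i ^+ n) (gen i).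

Definition p_N (N n : nat) : mp N := \sum_(i < N) mvar N i ^+ n.

Definition pLambda_N (N : nat) (L : spart) : grass (mp N) N :=
  gscale (\prod_(k <- L.2) p_N N k) (gprod [seq ptilde_N N n | n <- L.1]).

Definition restrict (N : nat) (f : superfun) : grass (mp N) N :=
  \sum_(cL <- f) gscale (mconst N cL.1) (pLambda_N N cL.2).

Definition vandermonde (N m : nat) : mp N :=
  \prod_(i < m) \prod_(j < m | (i < j)%N) (mvar N i - mvar N j).

(* E_{N,m}(F) = [ f_{1..m}(x) / prod_{i<j<=m} (x_i - x_j) ]_{x = 1} *)
Definition ENm (N m : nat) (F : grass (mp N) N) : Qa :=
  let g := F [set i : 'I_N | (i < m)%N] in
  meval1 (epsilon (inhabits 0) (fun q : mp N => g = vandermonde N m * q)).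

(* Qa[X,Y] = {poly {poly Qa}}: outer variable X, inner variable Y *)
Definition QXY : comNzRingType := {poly {poly Qa}}.

Definition hY (r : int) : {poly Qa} :=
  match r with
  | Posz k => (k`!%:R)^-1 *: \prod_(j < k) ('X + j%:R%:P)
  | Negz _ => 0
  end.

Definition E_ptilde (m n : nat) : grass QXY m :=
  \sum_(i < m) gscale (hY (n%:Z + (i.+1)%:Z - m%:Z))%:P (gen i).

Definition E_p : QXY := 'X.

Definition E_pLambda (m : nat) (L : spart) : grass QXY m :=
  gscale (E_p ^+ size L.2) (gprod [seq E_ptilde m n | n <- L.1]).

Definition E_super (m : nat) (f : superfun) : grass QXY m :=
  \sum_(cL <- f) gscale (cL.1%:P%:P : QXY) (E_pLambda m cL.2).

Definition specXY (N m : nat) (u : grass QXY m) : grass Qa m :=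
  [ffun S => ((u S).[(N%:R : Qa)%:P]).[m%:R]].

Definition phi_top (m : nat) : grass Qa m := gprod [seq gen i | i <- enum 'I_m].

(* Main.v *)
Require Import Defs.
From HB Require Import structures.
From mathcomp Require Import all_boot all_order all_algebra.
From mathcomp Require Import zify.
From Stdlib Require Import ClassicalEpsilon.
Set Implicit Arguments. Unset Strict Implicit. Unset Printing Implicit Defensive.
Import Order.TTheory GRing.Theory Num.Theory.
Local Open Scope ring_scope.

Fixpoint mev (n : nat) (v : nat -> Qa) : mp n -> Qa :=
  match n return mp n -> Qa with
  | 0 => fun p => p
  | n'.+1 => fun p => @mev n' v (p.[mconst n' (v n')])
  end.

Lemma mevB n v (p q : mp n) : mev v (p - q) = mev v p - mev v q.
Proof. elim: n p q => [//|n IH] p q /=. by rewrite hornerD hornerN -IH. Qed.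
Lemma mevM n v (p q : mp n) : mev v (p * q) = mev v p * mev v q.
Proof. elim: n p q => [//|n IH] p q /=. by rewrite hornerM IH. Qed.
Lemma mev1 n v : mev v (1 : mp n) = 1.
Proof. elim: n => [//|n IH] /=. by rewrite hornerC IH. Qed.

HB.instance Definition _ n v := GRing.isZmodMorphism.Build (mp n) Qa (@mev n v) (@mevB n v).
HB.instance Definition _ n v := GRing.isMonoidMorphism.Build (mp n) Qa (@mev n v) (conj (@mev1 n v) (@mevM n v)).

Lemma mevC n v c : mev v (mconst n c) = c.
Proof. elim: n => [//|n IH] /=. by rewrite hornerC IH. Qed.

Lemma mev_var n v i : mev v (mvar n i) = if (i < n)%N then v i else 0.
Proof.
elim: n => [//|n IH] /=. have [->|ne] := eqVneq i n.
  by rewrite hornerX mevC ltnSn.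
rewrite hornerC IH. have -> : (i < n.+1)%N = (i < n)%N by rewrite ltnS leq_eqVlt (negPf ne). by [].
Qed.

Lemma mconst1 n : mconst n 1 = 1.
Proof. elim: n => [//|n IH] /=. by rewrite IH. Qed.

Lemma meval1E n (p : mp n) : meval1 p = mev (fun _ => 1) p.
Proof. elim: n p => [//|n IH] p /=. by rewrite IH mconst1. Qed.


Section Gr.
Variables (A : comNzRingType) (K : nat).

Definition linear_g (u : grass A K) (c : 'I_K -> A) :=
  forall T, u T = \sum_i c i * (T == [set i])%:R.

Lemma gmul_lin (u v : grass A K) c S : linear_g u c ->
  gmul u v S = \sum_(i in S) c i * gsign [set i] (S :\ i) * v (S :\ i).
Proof.
move=> Hu; rewrite ffunE.
transitivity (\sum_(T : {set 'I_K} | T \subset S) \sum_(i : 'I_K)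
   c i * ((T == [set i])%:R * (gsign T (S :\: T) * v (S :\: T)))).
  apply: eq_bigr => T _; rewrite Hu big_distrr big_distrl /=.
  apply: eq_bigr => i _; rewrite !mulrA; congr (_ * _).
  by rewrite -mulrA [LHS]mulrC.
rewrite exchange_big /= [RHS]big_mkcond /=; apply: eq_bigr => i _.
case: (boolP (i \in S)) => iS.
  rewrite (bigD1 [set i]) /=; last by rewrite sub1set.
  rewrite eqxx big1 ?addr0; first by rewrite mul1r mulrA.
  by move=> T /andP[_ /negPf ->]; rewrite mul0r mulr0.
rewrite big1 // => T TS; case: eqP => [eT|]; last by rewrite mul0r mulr0.
by move: TS; rewrite eT sub1set (negPf iS).
Qed.

Lemma gsign1 i (U : {set 'I_K}) :
  @gsign A K [set i] U = (-1) ^+ #|[set j in U | (j < i)%N]|.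
Proof.
rewrite /gsign; congr (_ ^+ _).
have -> : [set p : 'I_K * 'I_K | (p.1 \in [set i]) && (p.2 \in U) && (p.2 < p.1)%N]
    = [set (i, j) | j in [set j in U | (j < i)%N]].
  apply/setP => -[a b]; rewrite !inE /=; apply/idP/imsetP.
    by case/andP=> /andP[/eqP -> bU] ba; exists b => //; rewrite inE bU ba.
  by case=> j; rewrite inE => /andP[jU ji] [-> ->]; rewrite eqxx jU ji.
by rewrite card_imset // => x y [].
Qed.

Lemma card_ltord n (j : 'I_n) : #|[set l : 'I_n | (l < j)%N]| = j.
Proof.
have -> : [set l : 'I_n | (l < j)%N] = widen_ord (ltnW (ltn_ord j)) @: setT.
  apply/setP => l; rewrite inE; apply/idP/imsetP.
    by move=> lj; exists (Ordinal lj) => //; apply: val_inj.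
  by case=> k _ ->; rewrite /= ltn_ord.
rewrite card_imset ?cardsT ?card_ord // => x y hxy; apply: val_inj; exact: (congr1 val hxy).
Qed.

Lemma bump_mono (j x y : nat) : (bump j x < bump j y)%N = (x < y)%N.
Proof.
rewrite /bump; case: (leqP j x) => hx; case: (leqP j y) => hy; rewrite ?add1n ?add0n ?ltnS; lia.
Qed.

Lemma gprod_lin (us : seq (grass A K)) (cf : nat -> 'I_K -> A) :
  (forall k, (k < size us)%N -> linear_g (nth 0 us k) (cf k)) ->
  (forall S : {set 'I_K}, #|S| != size us -> gprod us S = 0) /\
  (forall s : 'I_(size us) -> 'I_K, (forall x y, (s x < s y)%N = (x < y)%N) ->
     gprod us (s @: setT) = \det (\matrix_(k, j) cf k (s j))).
Proof.
elim: us cf => [|u us IH] cf Hl.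
  split.
    by move=> S; rewrite /= ffunE cards_eq0 => /negPf ->.
  move=> s _; rewrite det_mx00 /= ffunE.
  suff -> : s @: setT = set0 by rewrite eqxx.
  by apply/setP=> x; rewrite inE; apply/negP => /imsetP[[]].
have [IHg IHd] := IH (fun k => cf k.+1) (fun k hk => Hl k.+1 hk).
have Hu : linear_g u (cf 0%N) by exact: (Hl 0%N).
split.
  move=> S hS; rewrite /= (gmul_lin _ _ Hu); apply: big1 => i iS.
  rewrite IHg ?mulr0 //; apply: contra hS; rewrite [#|S|](cardsD1 i) iS => /eqP ->.
  by rewrite add1n.
move=> s smono.
have sinj : injective s.
  move=> x y exy; apply: val_inj => /=; case: (ltngtP x y) => // h.
    by move: h; rewrite -smono exy ltnn.
  by move: h; rewrite -smono exy ltnn.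
rewrite /= (gmul_lin _ _ Hu) (big_imset _ (in2W sinj)) /=.
rewrite (expand_det_row _ ord0).
apply: eq_big => [j|j _]; first by rewrite inE.
have eS : s @: setT :\ s j = (fun l => s (lift j l)) @: setT.
  apply/setP => x; rewrite !inE; apply/andP/imsetP.
    case=> xj /imsetP[l _ xl]; subst x.
    have lj : j != l by apply: contra xj => /eqP ->.
    case: (unlift_some lj) => l' el _; exists l' => //; by rewrite el.
  case=> l' _ ->; split; last by apply/imsetP; exists (lift j l').
  by apply/negP => /eqP /sinj /eqP; rewrite eq_sym (negPf (neq_lift j l')).
have cS : #|[set x in s @: setT :\ s j | (x < s j)%N]| = j.
  rewrite -[RHS](card_ltord j) -(card_imset _ sinj).
  suff -> : [set x in s @: setT :\ s j | (x < s j)%N] = s @: [set l : 'I_(size us).+1 | (l < j)%N] by [].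
  apply/setP => x; rewrite !inE; apply/idP/imsetP.
    case/andP=> /andP[xj /imsetP[l _ xl]]; subst x; rewrite smono => lj.
    by exists l => //; rewrite inE.
  case=> l; rewrite inE => lj ->; rewrite smono lj andbT.
  rewrite imset_f ?inE // andbT; apply: contraTneq lj => /sinj ->; by rewrite ltnn.
rewrite gsign1 cS eS (IHd (fun l => s (lift j l))); last first.
  by move=> x y; rewrite smono /= bump_mono.
rewrite mxE /cofactor add0n mulrA; congr (_ * _ * \det _).
by apply/matrixP => k l; rewrite !mxE lift0.
Qed.
End Gr.

Lemma natQa_eq (i j : nat) : ((i%:R : Qa) == j%:R) = (i == j)%N.
Proof.
have h n : (n%:R : Qa) = FracField.tofrac (n%:R : {poly rat}) by rewrite rmorph_nat.
rewrite !h tofrac_eq -!polyC_natr (inj_eq polyC_inj); exact: eqr_nat.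
Qed.

Lemma natQa_neq0 (n : nat) : (0 < n)%N -> (n%:R : Qa) != 0.
Proof. move=> hn; apply/negP=> /eqP h; move: (natQa_eq n 0); rewrite h eqxx. by case: n hn {h}. Qed.

Lemma prod_ffact (M k : nat) : (\prod_(t < k) (M.+1 + t))%N = (M + k) ^_ k.
Proof.
elim: k => [|k IH]; first by rewrite big_ord0 ffactn0.
by rewrite big_ord_recr /= IH ffactnS addnS /= mulnC; congr (_ * _)%N; lia.
Qed.

Lemma hY_eval (a j m : nat) : (j < m)%N ->
  (hY (a%:Z + (j.+1)%:Z - m%:Z)).[m%:R] = ('C(a + j, m.-1))%:R :> Qa.
Proof.
move=> jm; case: m jm => [//|M] jm /=.
case: (leqP M (a + j)) => hle.
  have -> : (a%:Z + (j.+1)%:Z - M.+1%:Z) = Posz (a + j - M) by lia.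
  have -> : (a + j)%N = (M + (a + j - M))%N by lia.
  set k := (a + j - M)%N.
  have -> : (M + k - M)%N = k by lia.
  rewrite /hY hornerZ horner_prod.
  have -> : \prod_(i < k) ('X + i%:R%:P).[M.+1%:R] = ((M + k)^_k)%:R :> Qa.
    rewrite -prod_ffact natr_prod; apply: eq_bigr => i _.
    by rewrite hornerD hornerX hornerC natrD.
  rewrite -bin_ffact natrM mulrC mulrK //; last first.
    by rewrite unitfE natQa_neq0 // fact_gt0.
  by rewrite -(bin_sub (leq_addr k M)) addKn.
have -> : (a%:Z + (j.+1)%:Z - M.+1%:Z) = Negz (M - (a + j)).-1 by rewrite NegzE; lia.
by rewrite /= horner0 bin_small.
Qed.

Lemma detB_detC (R : comNzRingType) m (a : seq nat) :
  \det (\matrix_(k < m, j < m) ('C(nth 0%N a k + j, m.-1))%:R : 'M[R]_m)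
  = \det (\matrix_(k < m, l < m) ('C(nth 0%N a k, m.-1 - l))%:R : 'M[R]_m).
Proof.
case: m => [|n]; first by rewrite !det_mx00.
set U := \matrix_(l < n.+1, j < n.+1) ('C(j, l))%:R : 'M[R]_n.+1.
set C := \matrix_(k < n.+1, l < n.+1) ('C(nth 0%N a k, n.+1.-1 - l))%:R : 'M[R]_n.+1.
have -> : \matrix_(k < n.+1, j < n.+1) ('C(nth 0%N a k + j, n.+1.-1))%:R = C *m U.
  apply/matrixP => k j; rewrite !mxE /= -binomial.Vandermonde natr_sum.
  rewrite (reindex_inj rev_ord_inj); apply: eq_bigr => i _ /=.
  rewrite !mxE /= natrM subSS; congr (_ * _); congr (_%:R); congr 'C(_, _).
  by rewrite subKn // -ltnS.
rewrite det_mulmx; suff -> : \det U = 1 by rewrite mulr1.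
rewrite -det_tr det_trig.
  by apply: big1 => i _; rewrite !mxE binn.
by apply/is_trig_mxP => i j ij; rewrite !mxE bin_small.
Qed.

Section Newton.
Variables (R : comNzRingType) (z : nat -> R).

Lemma ex_quot (g : {poly R}) (x : R) : exists q, g - (g.[x])%:P = q * ('X - x%:P).
Proof. by apply/factor_theorem; rewrite /root hornerD hornerN hornerC subrr. Qed.

Fixpoint Gdd (a p : nat) : {poly R} :=
  if p is p'.+1 then proj1_sig (constructive_indefinite_description _ (ex_quot (Gdd a p') (z p'))) else 'X^a.

Arguments Gdd : simpl never.

Definition hd a p := (Gdd a p).[z p].

Lemma Gdd_rec a p : Gdd a p = (hd a p)%:P + Gdd a p.+1 * ('X - (z p)%:P).
Proof.
have H := proj2_sig (constructive_indefinite_description _ (ex_quot (Gdd a p) (z p))).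
have -> : Gdd a p.+1 = proj1_sig (constructive_indefinite_description _ (ex_quot (Gdd a p) (z p))) by [].
by rewrite -H /hd addrC subrK.
Qed.

Definition Pn l := \prod_(i < l) ('X - (z i)%:P).

Lemma newton a p : 'X^a = \sum_(l < p) Pn l * (hd a l)%:P + Pn p * Gdd a p.
Proof.
elim: p => [|p IH]; first by rewrite big_ord0 add0r /Pn big_ord0 mul1r.
rewrite big_ord_recr /= IH -addrA; congr (_ + _).
rewrite {1}Gdd_rec /Pn big_ord_recr /= mulrDr; congr (_ + _).
by rewrite !mulrA mulrAC.
Qed.

Lemma newton_eval a p : (z p) ^+ a = \sum_(l < p.+1) (Pn l).[z p] * hd a l.
Proof.
have := congr1 (horner^~ (z p)) (newton a p); rewrite /= hornerXn => ->.
rewrite hornerD horner_sum big_ord_recr /=; congr (_ + _).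
  by apply: eq_bigr => l _; rewrite hornerM hornerC.
by rewrite hornerM.
Qed.

End Newton.
Arguments Gdd : simpl never.

Section Spec.
Variables (F : idomainType) (a : nat).
Definition Ep (p : nat) : {poly F} :=
  \sum_(u < a.+1) ('C(a, u + p)%:R)%:P * ('X - 1%:P) ^+ u.

Lemma Ep_rec p : Ep p = ('C(a, p)%:R)%:P + Ep p.+1 * ('X - 1%:P).
Proof.
rewrite /Ep big_ord_recl /= add0n expr0 mulr1; congr (_ + _).
rewrite big_distrl big_ord_recr /= bin_small ?mul0r ?addr0; last by lia.
apply: eq_bigr => i _; rewrite /bump /= add1n addSn addnS exprSr mulrA.
by [].
Qed.

Lemma Ep_eval p : (Ep p).[1] = 'C(a, p)%:R.
Proof. by rewrite Ep_rec hornerD hornerM hornerXsubC subrr mulr0 addr0 hornerC. Qed.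

Lemma Ep0 : Ep 0 = 'X^a.
Proof.
have -> : ('X^a : {poly F}) = (1 + ('X - 1%:P)) ^+ a by rewrite addrC subrK.
rewrite exprDn /Ep; apply: eq_bigr => i _.
by rewrite expr1n mul1r addn0 polyC_natr mulr_natl.
Qed.
End Spec.

Lemma Gdd_spec (R : comNzRingType) (z : nat -> R) (F : idomainType) (f : {rmorphism R -> F}) m a :
  (forall i, (i < m)%N -> f (z i) = 1) ->
  forall p, (p <= m)%N -> map_poly f (Gdd z a p) = Ep F a p.
Proof.
move=> hz; elim=> [|p IH] hp; first by rewrite /= map_polyXn Ep0.
have IH' := IH (ltnW hp).
move: (Gdd_rec z a p) => /(congr1 (map_poly f)).
rewrite rmorphD rmorphM /= map_polyC map_polyXsubC hz // IH' => e.
have e1 := congr1 (horner^~ 1) e.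
move: e1; rewrite /= Ep_eval hornerD hornerM hornerXsubC subrr mulr0 addr0 hornerC => e1.
have nz : ('X - 1%:P : {poly F}) != 0 by rewrite polyXsubC_eq0.
apply: (mulIf nz); apply: (@addrI _ ((f (hd z a p))%:P)).
by rewrite -e -e1 -Ep_rec.
Qed.

Lemma hd_spec (R : comNzRingType) (z : nat -> R) (F : idomainType) (f : {rmorphism R -> F}) m a p :
  (forall i, (i < m)%N -> f (z i) = 1) -> (p < m)%N ->
  f (hd z a p) = 'C(a, p)%:R.
Proof.
move=> hz hp; rewrite /hd -horner_map (Gdd_spec a hz (ltnW hp)) hz //.
exact: Ep_eval.
Qed.

Section Fact.
Variables (R : comNzRingType) (y : nat -> R) (m : nat) (a : nat -> nat).
Definition zn p := y (m.-1 - p).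
Definition Hmat := \matrix_(k < m, l < m) hd zn (a k) (m.-1 - l).
Definition Wmat := \matrix_(l < m, j < m)
   (if (j <= l)%N then (Pn zn (m.-1 - l)).[y j] else 0).

Lemma M_fact : \matrix_(k < m, j < m) (y j) ^+ (a k) = Hmat *m Wmat.
Proof.
apply/matrixP => k j; rewrite !mxE.
have jm := ltn_ord j.
set p := (m.-1 - j)%N.
have yz : y j = zn p by rewrite /zn /p; congr y; lia.
rewrite yz newton_eval.
rewrite [RHS](reindex_inj rev_ord_inj) /=.
have pm : (p.+1 <= m)%N by rewrite /p; lia.
have e := big_ord_widen _ (fun l => (Pn zn l).[zn p] * hd zn (a k) l) pm.
rewrite /= in e; rewrite e.
rewrite big_mkcond /=; apply: eq_bigr => l _; rewrite !mxE.
have -> : (m.-1 - (m - l.+1))%N = l by have := ltn_ord l; lia.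
have -> : (j <= m - l.+1)%N = (l < p.+1)%N by rewrite /p; have := ltn_ord l; lia.
by case: ifP => _; rewrite ?mulr0 // -yz mulrC.
Qed.

Lemma det_Wmat : \det Wmat = \prod_(i < m) \prod_(j < m | (i < j)%N) (y i - y j).
Proof.
rewrite det_trig; last first.
  by apply/is_trig_mxP => i j ij; rewrite mxE leqNgt ij.
apply: eq_bigr => i _; rewrite mxE leqnn /Pn horner_prod.
rewrite [RHS](reindex_inj rev_ord_inj) /=.
have im := ltn_ord i.
have e := big_ord_widen _ (fun t => ('X - (zn t)%:P).[y i]) (leq_trans (leq_subr i m.-1) (leq_pred m)).
rewrite /= in e; rewrite e.
apply: eq_big => [t|t _] /=.
  have := ltn_ord t; lia.
rewrite hornerXsubC /zn; congr (_ - y _); lia.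
Qed.
End Fact.

Lemma gprod_lin' (A : comNzRingType) (K : nat) (us : seq (grass A K))
  (cf : nat -> 'I_K -> A) (r : nat) (hr : size us = r) :
  (forall k, (k < size us)%N -> linear_g (nth 0 us k) (cf k)) ->
  (forall S : {set 'I_K}, #|S| != r -> gprod us S = 0) /\
  (forall s : 'I_r -> 'I_K, (forall x y, (s x < s y)%N = (x < y)%N) ->
     gprod us (s @: setT) = \det (\matrix_(k, j) cf k (s j))).
Proof. by subst r; exact: gprod_lin. Qed.

Lemma E_gprod (m : nat) (a : seq nat) (S : {set 'I_m}) : size a = m ->
  gprod [seq E_ptilde m n | n <- a] S =
  if S == setT then \det (\matrix_(k < m, j < m)
      ((hY ((nth 0%N a k)%:Z + (j.+1)%:Z - m%:Z))%:P : QXY)) else 0.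
Proof.
move=> hs.
have hu : forall k, (k < size [seq E_ptilde m n | n <- a])%N ->
   linear_g (nth 0 [seq E_ptilde m n | n <- a] k)
     (fun i : 'I_m => ((hY ((nth 0%N a k)%:Z + (i.+1)%:Z - m%:Z))%:P : QXY)).
  move=> k; rewrite (seq.size_map (fun n => E_ptilde m n) a) => hk T.
  rewrite (nth_map 0%N) // /E_ptilde sum_ffunE; apply: eq_bigr => i _.
  by rewrite !ffunE.
have [Hg Hd] := gprod_lin' (seq.size_map _ a) hu.
case: eqP => [->|neq].
  have -> : [set: 'I_m] = (fun x => x) @: setT by rewrite imset_id.
  by rewrite hs in Hd *; rewrite Hd.
apply: Hg; rewrite hs; apply/eqP => hS; apply: neq; apply/eqP.
by rewrite eqEcard subsetT cardsT card_ord hS leqnn.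
Qed.

Lemma P_gprod (N m : nat) (hmN : (m <= N)%N) (a : seq nat) : size a = m ->
  gprod [seq ptilde_N N n | n <- a] [set i : 'I_N | (i < m)%N]
  = \det (\matrix_(k < m, j < m) (mvar N j ^+ nth 0%N a k)).
Proof.
move=> hs.
have hu : forall k, (k < size [seq ptilde_N N n | n <- a])%N ->
   linear_g (nth 0 [seq ptilde_N N n | n <- a] k)
     (fun i : 'I_N => mvar N i ^+ nth 0%N a k).
  move=> k; rewrite (seq.size_map (fun n => ptilde_N N n) a) => hk T.
  rewrite (nth_map 0%N) // /ptilde_N sum_ffunE; apply: eq_bigr => i _.
  by rewrite !ffunE.
have [_ Hd] := gprod_lin' (seq.size_map _ a) hu.
rewrite hs in Hd.
have -> : [set i : 'I_N | (i < m)%N] = widen_ord hmN @: setT.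
  apply/setP => i; rewrite inE; apply/idP/imsetP.
    by move=> im; exists (Ordinal im) => //; apply: val_inj.
  by case=> j _ ->; rewrite /= ltn_ord.
rewrite Hd //; congr (\det _); apply/matrixP => k j; by rewrite !mxE.
Qed.

Lemma phi_top_E m S : phi_top m S = (S == setT)%:R.
Proof.
have hsz : size [seq @gen Qa m i | i <- enum 'I_m] = m.
  by rewrite seq.size_map size_enum_ord.
have hu : forall k, (k < size [seq @gen Qa m i | i <- enum 'I_m])%N ->
   linear_g (nth 0 [seq @gen Qa m i | i <- enum 'I_m] k)
     (fun i : 'I_m => ((k == i)%:R : Qa)).
  move=> k; rewrite hsz => hk T.
  rewrite (nth_map (Ordinal hk)) ?size_enum_ord //.
  set i0 := nth _ _ _.
  have vi0 : nat_of_ord i0 = k by rewrite /i0 nth_enum_ord.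
  rewrite (bigD1 i0) //= -vi0 eqxx mul1r big1 ?addr0; first by rewrite ffunE.
  move=> i ne; suff -> : (nat_of_ord i0 == nat_of_ord i) = false by rewrite mul0r.
  by apply/negbTE; apply: contra ne => /eqP /val_inj ->.
have [Hg Hd] := gprod_lin' hsz hu.
rewrite /phi_top; case: eqP => [->|neq].
  have -> : [set: 'I_m] = (fun x => x) @: setT by rewrite imset_id.
  rewrite Hd //.
  have -> : \matrix_(k < m, j < m) ((k == j)%:R : Qa) = 1%:M.
    by apply/matrixP => k j; rewrite !mxE.
  by rewrite det1.
apply: Hg; apply/eqP => hS; apply: neq; apply/eqP.
by rewrite eqEcard subsetT cardsT card_ord hS leqnn.
Qed.

Definition Qf N m (f : superfun) : mp N :=
  \sum_(cL <- f) mconst N cL.1 * (\prod_(k <- cL.2.2) p_N N k *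
     \det (Hmat (mvar N) m (fun k => nth 0%N cL.2.1 k))).

Lemma restrict_S0 N m f : (m <= N)%N -> homog_ferm m f ->
  restrict N f [set i : 'I_N | (i < m)%N] = vandermonde N m * Qf N m f.
Proof.
move=> hmN /allP hf.
rewrite /restrict sum_ffunE /Qf big_distrr; apply: eq_big_seq => cL hin /=.
have /andP[_ /eqP hs] := hf cL hin.
rewrite !ffunE P_gprod // M_fact det_mulmx det_Wmat /vandermonde.
set V := \prod_(i < m) _. set H := \det _. set P := \prod_(k <- _) _. set c := mconst N _.
by rewrite [RHS]mulrC -!mulrA.
Qed.

Lemma vand_neq0 N m : (m <= N)%N -> vandermonde N m != 0.
Proof.
move=> hmN; apply/negP => /eqP h.
have := congr1 (@mev N (fun i => i%:R)) h; rewrite rmorph0 rmorph_prod.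
apply/eqP; apply/prodf_neq0 => i _.
rewrite rmorph_prod; apply/prodf_neq0 => j ij.
rewrite rmorphB /= !mev_var.
have -> : (i < N)%N by have := ltn_ord i; lia.
have -> : (j < N)%N by have := ltn_ord j; lia.
by rewrite subr_eq0 natQa_eq neq_ltn ij.
Qed.

Lemma ENm_val N m f : (m <= N)%N -> homog_ferm m f ->
  ENm m (restrict N f) = meval1 (Qf N m f).
Proof.
move=> hmN hf; rewrite /ENm.
set P := fun q : mp N => _.
have hQ : P (Qf N m f) by rewrite /P restrict_S0.
have := epsilon_spec (inhabits 0) P (ex_intro _ _ hQ).
rewrite /P restrict_S0 // => /(mulfI (vand_neq0 hmN)) <-.
by [].
Qed.

Lemma mev_pN N k : mev (fun _ => 1) (p_N N k) = N%:R.
Proof.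
rewrite /p_N rmorph_sum /=.
under eq_bigr => i _ do rewrite rmorphXn /= mev_var ltn_ord expr1n.
by rewrite sumr_const card_ord.
Qed.

Lemma prod_const_seq (R : comNzRingType) (s : seq nat) (c : R) :
  \prod_(k <- s) c = c ^+ size s.
Proof. elim: s => [|x s IH]; by rewrite ?big_nil ?big_cons ?IH ?exprS. Qed.

Lemma meval_Qf N m f : (m <= N)%N ->
  meval1 (Qf N m f) = \sum_(cL <- f) cL.1 * (N%:R ^+ size cL.2.2 *
     \det (\matrix_(k < m, l < m) ('C(nth 0%N cL.2.1 k, m.-1 - l))%:R : 'M[Qa]_m)).
Proof.
move=> hmN; rewrite meval1E /Qf rmorph_sum; apply: eq_bigr => cL _.
rewrite rmorphM /= mevC rmorphM /= rmorph_prod /=.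
under eq_bigr => k _ do rewrite mev_pN.
rewrite prod_const_seq -det_map_mx; congr (_ * (_ * \det _)).
apply/matrixP => k l; rewrite !mxE /=.
apply: (@hd_spec _ _ _ (mev (fun _ => 1)) m).
  move=> i im; rewrite /zn /= mev_var.
  by have -> : (m.-1 - i < N)%N by lia.
have := ltn_ord l; lia.
Qed.

Definition ev2 (R : comNzRingType) (x : {poly R}) (y : R) (p : {poly {poly R}}) : R :=
  (p.[x]).[y].

Lemma ev2B (R : comNzRingType) x y (p q : {poly {poly R}}) : ev2 x y (p - q) = ev2 x y p - ev2 x y q.
Proof. by rewrite /ev2 hornerD hornerN hornerD hornerN. Qed.
Lemma ev2M (R : comNzRingType) x y (p q : {poly {poly R}}) : ev2 x y (p * q) = ev2 x y p * ev2 x y q.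
Proof. by rewrite /ev2 !hornerM. Qed.
Lemma ev21 (R : comNzRingType) x y : ev2 x y (1 : {poly {poly R}}) = 1 :> R.
Proof. by rewrite /ev2 !hornerC. Qed.


Lemma ev2D (R : comNzRingType) x y (p q : {poly {poly R}}) : ev2 x y (p + q) = ev2 x y p + ev2 x y q.
Proof. by rewrite /ev2 !hornerD. Qed.
Lemma ev20 (R : comNzRingType) x y : ev2 x y (0 : {poly {poly R}}) = 0 :> R.
Proof. by rewrite /ev2 !horner0. Qed.
Lemma ev2N1 (R : comNzRingType) x y : ev2 x y (-1 : {poly {poly R}}) = -1 :> R.
Proof. by rewrite /ev2 !hornerN !hornerC. Qed.

Lemma ev2Xn (R : comNzRingType) x y (p : {poly {poly R}}) k :
  ev2 x y (p ^+ k) = ev2 x y p ^+ k.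
Proof. elim: k => [|k IH]; by rewrite ?ev21 // !exprS ev2M IH. Qed.

Lemma ev2_det (R : comNzRingType) x y m (B : 'M[{poly {poly R}}]_m) :
  ev2 x y (\det B) = \det (map_mx (ev2 x y) B).
Proof.
rewrite /determinant (big_morph (ev2 x y) (@ev2D R x y) (@ev20 R x y)).
apply: eq_bigr => s _; rewrite ev2M ev2Xn ev2N1; congr (_ * _).
rewrite (big_morph (ev2 x y) (@ev2M R x y) (@ev21 R x y)).
by apply: eq_bigr => i _; rewrite mxE.
Qed.
Lemma ev2_term (R : comNzRingType) (c : R) x y k m (A : 'M[{poly R}]_m) :
  ev2 x y (c%:P%:P * ('X ^+ k * \det (map_mx polyC A)))
  = c * ((x.[y]) ^+ k * \det (map_mx (fun p => p.[y]) A)).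
Proof.
rewrite !ev2M ev2Xn ev2_det.
have e1 : ev2 x y (c%:P)%:P = c by rewrite /ev2 !hornerC.
have e2 : ev2 x y 'X = x.[y] by rewrite /ev2 hornerX.
have e3 : map_mx (ev2 x y) (map_mx polyC A) = map_mx (fun p => p.[y]) A.
  by apply/matrixP => i j; rewrite !mxE /ev2 hornerC.
by rewrite e1 e2 e3.
Qed.

Lemma LHS_val N m f S : homog_ferm m f ->
  specXY N (E_super m f) S = if S == setT then
   \sum_(cL <- f) cL.1 * (N%:R ^+ size cL.2.2 *
     \det (\matrix_(k < m, j < m) ('C(nth 0%N cL.2.1 k + j, m.-1))%:R : 'M[Qa]_m))
   else 0.
Proof.
move=> /allP hf; rewrite ffunE.
have -> : ((E_super m f S).[(N%:R : Qa)%:P]).[m%:R] = ev2 ((N%:R : Qa)%:P) m%:R (E_super m f S) by [].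
rewrite /E_super sum_ffunE (big_morph (ev2 _ _) (@ev2D _ _ _) (@ev20 _ _ _)).
case: eqP => [eS|neS].
  apply: eq_big_seq => cL hin.
  have /andP[_ /eqP hs] := hf cL hin.
  rewrite !ffunE E_gprod // eS eqxx.
  have -> : \matrix_(k < m, j < m) ((hY ((nth 0%N cL.2.1 k)%:Z + (j.+1)%:Z - m%:Z))%:P : QXY)
     = map_mx polyC (\matrix_(k < m, j < m) (hY ((nth 0%N cL.2.1 k)%:Z + (j.+1)%:Z - m%:Z))).
    by apply/matrixP => k j; rewrite !mxE.
  rewrite ev2_term hornerC.
  congr (_ * (_ * \det _)).
  by apply/matrixP => k j; rewrite !mxE hY_eval.
apply: big1_seq => cL hin.
have /andP[_ /eqP hs] := hf cL hin.
rewrite !ffunE E_gprod //.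
case: eqP => // _; by rewrite !mulr0 ev20.
Qed.

Theorem mainTheorem20 (m : nat) (f : superfun) (N : nat) :
  homog_ferm m f -> (m <= N)%N ->
  specXY N (E_super m f) = gscale (ENm m (restrict N f)) (phi_top m).
Proof.
move=> hf hmN; apply/ffunP => S.
rewrite LHS_val // [RHS]ffunE phi_top_E ENm_val // meval_Qf //.
case: eqP => _; last by rewrite mulr0.
rewrite mulr1; apply: eq_bigr => cL _.
by rewrite detB_detC.
Qed.
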